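(* Let $n$ be odd and $k\ge 4$ even with $2k\le n$ and $n\equiv \pm 2 \pmod{k-1}$, and put $s=\frac{(n-4)(k-2)}{2(k-1)}$. Then there is a map $\sigma:\mathbb{Z}_n\to\mathbb{Z}_n$ such that for every edge $x_ix_j$ of $\mathrm{Pb}(n,k)$, the circular distance between $\sigma(i)$ and $\sigma(j)$ in $\mathbb{Z}_n$ is at least $s$; i.e., $\sigma$ is a homomorphism $\mathrm{Pb}(n,k)\to K_{n/s}$.
   Context: $\mathrm{Pb}(n,k)$ is the graph with vertex set $\{x_0,\dots,x_{n-1}\}$ (indices in $\mathbb{Z}_n$) in which $x_i$ is adjacent to $x_{i\pm1}$ and to $x_{i\pm k}$ (it is obtained from the generalized Petersen graph $\mathrm{Pet}(n,k)$ by identifying $u_i$ with $v_i$ for each $i$). For a real $s$ with $0<s\le n/2$, $K_{n/s}$ denotes the graph on $\mathbb{Z}_n=\{0,\dots,n-1\}$ in which $i\sim j$ iff $s\le |i-j|\le n-s$ (equivalently, the circular distance $\min(|i-j|,n-|i-j|)$ is at least $s$). *)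

(* Defs.v *)
From mathcomp Require Import all_boot all_order all_algebra.
Set Implicit Arguments. Unset Strict Implicit. Unset Printing Implicit Defensive.

Definition Pb_adj (n k : nat) (i j : 'I_n) : bool :=
  [|| (j == (i + 1) %% n :> nat), (i == (j + 1) %% n :> nat),
      (j == (i + k) %% n :> nat) | (i == (j + k) %% n :> nat)].

Definition circ_dist (n : nat) (a b : 'I_n) : nat :=
  let d := `|(a : nat) - (b : nat)|%N in minn d (n - d).

Definition Kns_adj (n : nat) (s : rat) (a b : 'I_n) : bool :=
  (s <= (circ_dist a b)%:R)%R.

(* Main.v *)
Require Import Defs.
From mathcomp Require Import all_boot all_order all_algebra.
From mathcomp Require Import zify.
Import GRing.Theory Num.Theory.
Definition fN (n x : nat) := minn (x %% n) (n - x %% n).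
Lemma circ_f_nat {n a b : nat} : a < n -> b < n -> a < b ->
  minn (b - a) (n - (b - a)) = fN n (a + (n - b)) /\ minn (b - a) (n - (b - a)) = fN n (b + (n - a)).
Proof.
move=> Ha Hb Hab; rewrite /fN.
  have -> : (a + (n - b)) %% n = n - (b - a) by rewrite modn_small; lia.
  have -> : (b + (n - a)) = n + (b - a) by lia.
  rewrite modnDl modn_small; last lia.
  split; first rewrite minnC; congr minn; lia.
Qed.
Lemma circ_f n (a b : 'I_n) :
  circ_dist a b = fN n (a + (n - b)) /\ circ_dist a b = fN n (b + (n - a)).
Proof.
rewrite /circ_dist.
have Ha := ltn_ord a; have Hb := ltn_ord b.
move: Ha Hb; move: (nat_of_ord a) (nat_of_ord b) => x y Ha Hb.
case: (ltngtP x y) => Hab.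
- by rewrite (distnEr (ltnW Hab)); apply: circ_f_nat.
- rewrite (distnEl (ltnW Hab)); have [-> ->] := circ_f_nat Hb Ha Hab; by [].
- rewrite Hab distnEl // subnn /fN.
  have -> : y + (n - y) = n by rewrite subnKC // ltnW.
  by rewrite modnn.
Qed.
Lemma fN_mod n x y : x = y %[mod n] -> fN n x = fN n y.
Proof. by rewrite /fN => ->. Qed.

Lemma edge_f n c d t u : 0 < n -> u = (t + d) %% n ->
  fN n ((c * u) %% n + (n - (c * t) %% n)) = fN n (c * d).
Proof.
move=> n0 Hu; apply: fN_mod.
set x := _ + _.
have Hlt := ltn_pmod (c * t) n0.
have : (x + (c * t) %% n) %% n = (c * d + (c * t) %% n) %% n.
  rewrite /x -addnA subnK ?(ltnW Hlt) // modnDr modn_mod Hu modnMmr.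
  by rewrite modnDmr mulnDr addnC.
by rewrite -modnDmr -[in RHS]modnDmr => /eqP; rewrite eqn_modDr => /eqP.
Qed.

Lemma s_le n k D : 0 < k - 1 -> (n - 4) * (k - 2) <= 2 * (k - 1) * D ->
  (((((n - 4) * (k - 2))%:R / (2 * (k - 1))%:R)%R : rat) <= (D%:R))%R.
Proof.
move=> k1 H; rewrite ler_pdivrMr ?ltr0n ?muln_gt0 //.
by rewrite -natrM ler_nat (mulnC D).
Qed.

Lemma fN_ge n x P Q : x < n -> P <= Q * x -> P <= Q * (n - x) -> P <= Q * fN n x.
Proof. by move=> xn h1 h2; rewrite /fN modn_small // /minn; case: ifP. Qed.

Lemma caseP B p n : 3 <= B -> 1 <= p -> n = B * (2 * p + 1) + 2 ->
  (B * p + 1 < n /\ (n - 4) * (2 * p) <= 2 * (2 * p + 1) * (B * p + 1) /\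
      (n - 4) * (2 * p) <= 2 * (2 * p + 1) * (n - (B * p + 1)) /\
      (B * p + 1) * (2 * p + 2) = p * n + (B * p + 2) /\ B * p + 2 < n /\
      (n - 4) * (2 * p) <= 2 * (2 * p + 1) * (B * p + 2) /\
      (n - 4) * (2 * p) <= 2 * (2 * p + 1) * (n - (B * p + 2))).
Proof. move=> h1 h2 ->; repeat split; nia. Qed.

Lemma caseM B p n : 3 <= B -> 1 <= p -> n = B * (2 * p + 1) - 2 ->
  (B * p - 1 < n /\ (n - 4) * (2 * p) <= 2 * (2 * p + 1) * (B * p - 1) /\
      (n - 4) * (2 * p) <= 2 * (2 * p + 1) * (n - (B * p - 1)) /\
      (B * p - 1) * (2 * p + 2) = p * n + (B * p - 2) /\ B * p - 2 < n /\
      (n - 4) * (2 * p) <= 2 * (2 * p + 1) * (B * p - 2) /\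
      (n - 4) * (2 * p) <= 2 * (2 * p + 1) * (n - (B * p - 2))).
Proof. move=> h1 h2 ->; repeat split; nia. Qed.

Theorem theorem5 (n k : nat) :
  odd n -> ~~ odd k -> 4 <= k -> 2 * k <= n ->
  (n %% (k - 1) == 2 %% (k - 1)) || ((n + 2) %% (k - 1) == 0) ->
  exists sigma : 'I_n -> 'I_n,
    forall i j : 'I_n, Pb_adj k i j ->
      Kns_adj ((((n - 4) * (k - 2))%:R / (2 * (k - 1))%:R)%R : rat)
              (sigma i) (sigma j).
Proof.
move=> on ek k4 kn Hm.
have n0 : 0 < n by lia.
suff [c [H1 H2]] : exists c, (n - 4) * (k - 2) <= 2 * (k - 1) * fN n c /\
                   (n - 4) * (k - 2) <= 2 * (k - 1) * fN n (c * k).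
  exists (fun i : 'I_n => Ordinal (ltn_pmod (c * i) n0)) => i j.
  rewrite /Pb_adj /Kns_adj /=.
  have k1 : 0 < k - 1 by lia.
  have [C1 C2] := @circ_f n (Ordinal (ltn_pmod (c * i) n0)) (Ordinal (ltn_pmod (c * j) n0)).
  rewrite /= in C1 C2.
  case/or4P => /eqP E; apply: s_le => //.
  - by rewrite C2 (@edge_f n c _ _ _ n0 E) muln1.
  - by rewrite C1 (@edge_f n c _ _ _ n0 E) muln1.
  - by rewrite C2 (@edge_f n c _ _ _ n0 E).
  - by rewrite C1 (@edge_f n c _ _ _ n0 E).
have Hk := odd_double_half k; rewrite (negbTE ek) add0n -muln2 in Hk.
have [a Ka] : exists a, k = 2 * a + 4 by exists (k./2 - 2); lia.
have k1 : k - 1 = 2 * a + 3 by lia.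
have k2 : k - 2 = 2 * a + 2 by lia.
rewrite k1 in Hm; rewrite k1 k2.
have [m Hn] : exists m, n = m * (2 * a + 3) + 2 \/ n + 2 = m * (2 * a + 3).
  case/orP: Hm => /eqP E.
  - exists (n %/ (2 * a + 3)); left.
    by rewrite {1}(divn_eq n (2 * a + 3)) E modn_small //; lia.
  - exists ((n + 2) %/ (2 * a + 3)); right.
    by rewrite {1}(divn_eq (n + 2) (2 * a + 3)) E addn0.
have om : odd m.
  have on2 : odd (n + 2) by rewrite oddD on.
  case: Hn => E.
  - by move: on; rewrite E oddD oddM /= oddD oddM /= andbT addbF.
  - by move: on2; rewrite E oddM oddD oddM /= andbT.
have Hm2 := odd_double_half m; rewrite om -muln2 in Hm2.
have [b Mb] : exists b, m = 2 * b + 1 by exists (m./2); lia.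
clear Hk Hm Hm2 k1 k2.
subst m k.
clear om.
have b1 : 0 < b.
  by case: (posnP b) => [b0|//]; case: Hn; rewrite b0; lia.
have [Ep1 Ep2 Ep3] : [/\ 2 * a + 3 = 2 * (a + 1) + 1, 2 * a + 2 = 2 * (a + 1)
                      & 2 * a + 4 = 2 * (a + 1) + 2] by split; lia.
rewrite Ep1 Ep2 Ep3 in Hn *.
have B3 : 3 <= 2 * b + 1 by lia.
have p1 : 1 <= a + 1 by lia.
move: Hn B3 p1; move: (2 * b + 1) (a + 1) => B p Hn B3 p1.
case: Hn => En.
- have [h1 [h2 [h3 [h4 [h5 [h6 h7]]]]]] := @caseP B p n B3 p1 En.
  exists (B * p + 1).
  rewrite h4 (@fN_mod n _ _ (modnMDl _ _ _)).
  by split; apply: fN_ge.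
- have En' : n = B * (2 * p + 1) - 2 by lia.
  have [h1 [h2 [h3 [h4 [h5 [h6 h7]]]]]] := @caseM B p n B3 p1 En'.
  exists (B * p - 1).
  rewrite h4 (@fN_mod n _ _ (modnMDl _ _ _)).
  by split; apply: fN_ge.
Qed.
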